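(* Let $\mathfrak L=\mathbb V\oplus\mathbb W$ be a color gLt-algebra admitting a quasi-multiplicative basis $\mathfrak B=\{e_i\}_{i\in I}$ of $\mathbb W\neq 0$. If $[i]\neq[h]$ for some $i,h\in I$, then $\langle\mathfrak J_{[i]},\mathfrak J_{[h]},\mathfrak L,\dots,\mathfrak L\rangle_\sigma=0$ for every $\sigma\in\mathbb S_n$.
   Context: Let $\mathbb F$ be a field, $\mathbb G$ an abelian group, $n\ge 2$, and $\epsilon:\mathbb G\times\mathbb G\to\mathbb F\setminus\{0\}$ a bicharacter ($\epsilon(k,g+h)=\epsilon(k,g)\epsilon(k,h)$, $\epsilon(g+h,k)=\epsilon(g,k)\epsilon(h,k)$, $\epsilon(g,h)\epsilon(h,g)=1$). A graded $n$-ary algebra is a $\mathbb G$-graded vector space $\mathfrak L=\bigoplus_{g\in\mathbb G}\mathfrak L_g$ with an $n$-linear map $\langle\cdot,\dots,\cdot\rangle:\mathfrak L^n\to\mathfrak L$ such that $\langle\mathfrak L_{g_1},\dots,\mathfrak L_{g_n}\rangle\subset\mathfrak L_{g_1+\dots+g_n}$. For $\sigma\in\mathbb S_n$ write $\langle x_1,\dots,x_n\rangle_\sigma:=\langle x_{\sigma(1)},\dots,x_{\sigma(n)}\rangle$; for subsets $A_1,\dots,A_n$, $\langle A_1,\dots,A_n\rangle_\sigma$ denotes the linear span of all $\langle x_1,\dots,x_n\rangle_\sigma$ with $x_r\in A_r$. A color gLt-algebra is a graded $n$-ary algebra satisfying, for each $k=1,\dots,n$ and fixed scalars $\alpha^{\sigma_1,\sigma_2}_{i,j,k}\in\mathbb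 F$, the color version (each term on the right multiplied by the product of values of $\epsilon$ on the degrees of the homogeneous arguments transposed in passing from the left-hand order to the order of that term) of the identity $\langle y_1,\dots,y_{k-1},\langle x_1,\dots,x_n\rangle,y_k,\dots,y_{n-1}\rangle=\sum_{1\le i,j\le n,\,\sigma_1\in\mathbb S_n,\,\sigma_2\in\mathbb S_{n-1}}\alpha^{\sigma_1,\sigma_2}_{i,j,k}\langle x_{\sigma_1(1)},\dots,x_{\sigma_1(i-1)},\langle y_{\sigma_2(1)},\dots,y_{\sigma_2(j-1)},x_{\sigma_1(i)},y_{\sigma_2(j)},\dots,y_{\sigma_2(n-1)}\rangle,x_{\sigma_1(i+1)},\dots,x_{\sigma_1(n)}\rangle$. $\mathfrak L$ admits a quasi-multiplicative basis if $\mathfrak L=\mathbb V\oplus\mathbb W$ with $\mathbb V$, $\mathbb W\ne0$ graded subspaces and $\mathfrak B=\{e_i\}_{i\in I}$ a basis of homogeneous elements of $\mathbb W$ such that: (1) for $i_1,\dots,i_n\in I$, either $\langle e_{i_1},\dots,e_{i_n}\rangle\in\mathbb Fe_j$ for some $j\in I$ or $\langle e_{i_1},\dots,e_{i_n}\rangle\in\mathbb V$; (2) for $0<k<n$, $i_1,\dots,i_k\in I$ and $\sigma\in\mathbb S_n$, $\langle e_{i_1},\dots,e_{i_k},\mathbb V,\dots,\mathbb V\rangle_\sigma\subset\mathbb Fe_{j_\sigma}$ for some $j_\sigma\in I$; (3) either $\langle\mathbb V,\dots,\mathbb V\rangle\subset\mathbb Fe_j$ for some $j\in I$ or $\langle\mathbb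 V,\dots,\mathbb V\rangle\subset\mathbb V$. Index maps: let $v$ be a symbol not in $I$, $\mathfrak I:=I\,\dot\cup\,\{v\}$; for each $j\in\mathfrak I$ take a new symbol $\overline j$, $\overline I:=\{\overline i:i\in I\}$, $\overline{\mathfrak I}:=\overline I\,\dot\cup\,\{\overline v\}$; set $\overline{(\overline j)}:=j$, $\overline J:=\{\overline j:j\in J\}$ for a set $J$ of symbols ($\overline\emptyset=\emptyset$). Put $u_j:=e_j$ for $j\in I$ and $u_v:=\mathbb V$. For $\sigma\in\mathbb S_n$ and $(j_1,\dots,j_n)\in\mathfrak I^n$ let $a_\sigma(j_1,\dots,j_n)=\{r\}$ if $r\in I$ and $0\ne\langle u_{j_1},\dots,u_{j_n}\rangle_\sigma\subset\mathbb Fe_r$, $=\{v\}$ if $0\ne\langle u_{j_1},\dots,u_{j_n}\rangle_\sigma\subset\mathbb V$, and $=\emptyset$ otherwise. For $j,j_2,\dots,j_n\in\mathfrak I$ let $b_\sigma(j,\overline j_2,\dots,\overline j_n):=\{x\in\mathfrak I: a_\sigma(x,j_2,\dots,j_n)=\{j\}\}$. Define $\mu$ on $(\mathfrak I\,\dot\cup\,\overline{\mathfrak I})\times(\mathfrak I^{n-1}\,\dot\cup\,\overline{\mathfrak I}^{n-1})$ with values subsets of $\mathfrak I$ by: $\mu(j,j_1,\dots,j_{n-1})=\bigcup_{\sigma\in\mathbb S_n}a_\sigma(j,j_1,\dots,j_{n-1})$ for $j,j_1,\dots,j_{n-1}\in\mathfrak I$; $\mu(j,\overline j_1,\dots,\overline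 j_{n-1})=\bigcup_{\sigma\in\mathbb S_n}b_\sigma(j,\overline j_1,\dots,\overline j_{n-1})$ for $j,j_1,\dots,j_{n-1}\in\mathfrak I$; $\mu(\overline j,j_1,\dots,j_{n-1})=\bigcup_{1\le k\le n-1,\ \sigma\in\mathbb S_n}b_\sigma(j_k,\overline j,\overline j_1,\dots,\overline j_{k-1},\overline j_{k+1},\dots,\overline j_{n-1})$ for $j,j_1,\dots,j_{n-1}\in\mathfrak I$; and $\mu(\overline j,\overline j_1,\dots,\overline j_{n-1})=\emptyset$. Define $\phi$ on pairs $(J,X)$ with $J\subset I\,\dot\cup\,\overline I$ and $X\in\mathfrak I^{n-1}\,\dot\cup\,\overline{\mathfrak I}^{n-1}$ by $\phi(\emptyset,X)=\emptyset$ and, for $J\ne\emptyset$, $\phi(J,X):=K\cup\overline K$ where $K:=\big(\bigcup_{j\in J}\mu(j,X)\big)\setminus\{v\}$. Connections: for distinct $i,j\in I$, $i$ is connected to $j$ if there exist $t\ge1$, $X_1,\dots,X_t\in\mathfrak I^{n-1}\,\dot\cup\,\overline{\mathfrak I}^{n-1}$ and $\widetilde i\in\{i,\overline i\}$ such that $\phi(\{\widetilde i\},X_1)\ne\emptyset$, …, $\phi(\cdots\phi(\{\widetilde i\},X_1)\cdots,X_{t-1})\ne\emptyset$, and $j\in\phi(\cdots\phi(\phi(\{\widetilde i\},X_1),X_2)\cdots,X_t)$; every $i$ is connected to itself. Being connected is an equivalence relation $\sim$ on $I$; $[i]$ denotes the class of $i$. Define $\mathbb V_{[i]}:=\big(\sum_{i_1,\dots,i_n\in[i]}\mathbb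 F\langle e_{i_1},\dots,e_{i_n}\rangle\big)\cap\mathbb V$, $\mathbb W_{[i]}:=\bigoplus_{j\in[i]}\mathbb Fe_j$, and $\mathfrak J_{[i]}:=\mathbb V_{[i]}\oplus\mathbb W_{[i]}$. *)

(* Defs.v *)
From HB Require Import structures.
From mathcomp Require Import all_boot all_order all_algebra all_fingroup.
Set Implicit Arguments. Unset Strict Implicit. Unset Printing Implicit Defensive.
Import GRing.Theory.
Local Open Scope ring_scope.

Section ColorGLt.
Variables (F : fieldType) (G : zmodType) (n : nat) (L : lmodType F).

Definition bicharacter (eps : G -> G -> F) : Prop :=
  (forall g h, eps g h != 0) /\
  (forall k g h, eps k (g + h) = eps k g * eps k h) /\
  (forall g h k, eps (g + h) k = eps g k * eps h k) /\
  (forall g h, eps g h * eps h g = 1).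

Definition subspace (P : L -> Prop) : Prop :=
  P 0 /\ forall (a : F) x y, P x -> P y -> P (a *: x + y).

Definition span (P : L -> Prop) (z : L) : Prop :=
  exists m (c : 'I_m -> F) (y : 'I_m -> L),
    (forall k, P (y k)) /\ z = \sum_(k < m) c k *: y k.

Variable Lg : G -> L -> Prop.

Definition graded_space : Prop :=
  (forall g, subspace (Lg g)) /\
  (forall x, exists (s : seq G) (f : G -> L),
      uniq s /\ (forall g, g \in s -> Lg g (f g)) /\ x = \sum_(g <- s) f g) /\
  (forall (s : seq G) (f : G -> L), uniq s -> (forall g, g \in s -> Lg g (f g)) ->
      \sum_(g <- s) f g = 0 -> forall g, g \in s -> f g = 0).

Definition graded_subspace (S : L -> Prop) : Prop :=
  subspace S /\
  forall x, S x -> exists (s : seq G) (f : G -> L),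
      uniq s /\ (forall g, g \in s -> Lg g (f g) /\ S (f g)) /\ x = \sum_(g <- s) f g.

Definition homogeneous (x : L) : Prop := exists g, Lg g x.

Variable mu : {ffun 'I_n -> L} -> L.

Definition upd (x : {ffun 'I_n -> L}) (r : 'I_n) (u : L) : {ffun 'I_n -> L} :=
  [ffun p => if p == r then u else x p].

Definition multilinear : Prop :=
  forall x r (a : F) u w, mu (upd x r (a *: u + w)) = a *: mu (upd x r u) + mu (upd x r w).

Definition graded_nary_algebra : Prop :=
  graded_space /\ multilinear /\
  forall (x : {ffun 'I_n -> L}) (d : 'I_n -> G),
    (forall r, Lg (d r) (x r)) -> Lg (\sum_(r < n) d r) (mu x).

Definition pnat N (s : {perm 'I_N}) (m : nat) : nat :=
  if (insub m : option 'I_N) is Some o then val (s o) else m.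

Variable eps : G -> G -> F.

(* Color sign of passing from the order Lft to the order Rgt of the (distinct)
   labelled arguments: product of eps (deg a) (deg b) over all pairs (a, b)
   with a before b in Lft but b before a in Rgt. *)
Definition color_sign (deg : bool * nat -> G) (Lft Rgt : seq (bool * nat)) : F :=
  \prod_(0 <= p < size Lft)
    \prod_(p.+1 <= q < size Lft |
             (index (nth (true, 0%N) Lft q) Rgt < index (nth (true, 0%N) Lft p) Rgt)%N)
      eps (deg (nth (true, 0%N) Lft p)) (deg (nth (true, 0%N) Lft q)).

(* labels: (true, m) = x_(m+1), (false, m) = y_(m+1) (0-based indices) *)
Definition lhs_order (kk : nat) : seq (bool * nat) :=
  [seq (false, m) | m <- iota 0 kk] ++ [seq (true, m) | m <- iota 0 n] ++
  [seq (false, m) | m <- iota kk (n.-1 - kk)%N].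

Definition rhs_order (i0 j0 : nat) (s1 : {perm 'I_n}) (s2 : {perm 'I_n.-1})
  : seq (bool * nat) :=
  [seq (true, pnat s1 m) | m <- iota 0 i0] ++
  [seq (false, pnat s2 m) | m <- iota 0 j0] ++
  (true, pnat s1 i0) :: [seq (false, pnat s2 m) | m <- iota j0 (n.-1 - j0)%N] ++
  [seq (true, pnat s1 m) | m <- iota i0.+1 (n - i0.+1)%N].

(* Color gLt identity, k = kk+1, i = i0+1, j = j0+1 (0-based); alpha i0 j0 kk s1 s2
   is the scalar alpha^{s1,s2}_{i,j,k}. *)
Definition color_gLt
  (alpha : 'I_n -> 'I_n -> 'I_n -> {perm 'I_n} -> {perm 'I_n.-1} -> F) : Prop :=
  forall (kk : 'I_n) (x y : nat -> L) (dx dy : nat -> G),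
    (forall m, (m < n)%N -> Lg (dx m) (x m)) ->
    (forall m, (m < n.-1)%N -> Lg (dy m) (y m)) ->
    let deg := fun o : bool * nat => if o.1 then dx o.2 else dy o.2 in
    mu [ffun p : 'I_n => if (p < kk)%N then y p
                         else if p == kk then mu [ffun q : 'I_n => x q]
                         else y p.-1] =
    \sum_(i0 < n) \sum_(j0 < n) \sum_(s1 : {perm 'I_n}) \sum_(s2 : {perm 'I_n.-1})
      (alpha i0 j0 kk s1 s2 * color_sign deg (lhs_order kk) (rhs_order i0 j0 s1 s2)) *:
      mu [ffun p : 'I_n =>
            if p == i0 then
              mu [ffun q : 'I_n => if (q < j0)%N then y (pnat s2 q)
                                   else if q == j0 then x (pnat s1 i0)
                                   else y (pnat s2 q.-1)]
            else x (pnat s1 p)].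

Variables (V W : L -> Prop) (I : Type) (e : I -> L).

Definition prodset (s : {perm 'I_n}) (A : 'I_n -> L -> Prop) : L -> Prop :=
  span (fun z => exists x : {ffun 'I_n -> L},
                   (forall r, A r (x r)) /\ z = mu [ffun r => x (s r)]).

Definition in_line (i : I) (z : L) : Prop := exists c : F, z = c *: e i.

Definition direct_sum_VW : Prop :=
  (forall x, exists v w, V v /\ W w /\ x = v + w) /\
  (forall x, V x -> W x -> x = 0).

Definition homogeneous_basis_of_W : Prop :=
  (forall i, homogeneous (e i)) /\
  (forall m (f : 'I_m -> I) (c : 'I_m -> F), injective f ->
      \sum_(k < m) c k *: e (f k) = 0 -> forall k, c k = 0) /\
  (forall w, W w <-> exists m (f : 'I_m -> I) (c : 'I_m -> F),
                       w = \sum_(k < m) c k *: e (f k)).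

Definition quasi_multiplicative_basis : Prop :=
  graded_subspace V /\ graded_subspace W /\
  (exists x, V x /\ x <> 0) /\ (exists x, W x /\ x <> 0) /\
  direct_sum_VW /\ homogeneous_basis_of_W /\
  (forall ix : 'I_n -> I,
      (exists j, in_line j (mu [ffun r => e (ix r)])) \/ V (mu [ffun r => e (ix r)])) /\
  (* (2) : the indices i_1..i_k are ix 0, ..., ix (k-1) *)
  (forall (k : nat) (ix : nat -> I) (s : {perm 'I_n}), (0 < k < n)%N ->
      exists j, forall z,
        prodset s (fun r => if (r < k)%N then (fun u => u = e (ix r)) else V) z ->
        in_line j z) /\
  ((exists j, forall z, prodset 1%g (fun _ => V) z -> in_line j z) \/
   (forall z, prodset 1%g (fun _ => V) z -> V z)).

(* Index maps. Symbols of \frak I = I \cup {v} are [option I] (None = v). *)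
Definition usym (j : option I) : L -> Prop :=
  match j with Some i => fun z => z = e i | None => V end.

(* a_s(j_1,...,j_n) as a relation: asig s js t <-> a_s(js) = {t};
   js m is j_(m+1) *)
Definition asig (s : {perm 'I_n}) (js : nat -> option I) (t : option I) : Prop :=
  let S := prodset s (fun r => usym (js r)) in
  (exists z, S z /\ z <> 0) /\
  match t with
  | Some r => forall z, S z -> in_line r z
  | None => forall z, S z -> V z
  end.

(* mu(b-symbol j, X) as a subset of \frak I.  b = true means barred j;
   X = (bX, js): bX = true means a barred (n-1)-tuple, js m is j_(m+1). *)
Definition musym (b : bool) (j : option I) (X : bool * (nat -> option I))
  (t : option I) : Prop :=
  match b, X.1 with
  | false, false => exists s, asig s (fun m => if m == 0%N then j else X.2 m.-1) t
  | false, true => exists s, asig s (fun m => if m == 0%N then t else X.2 m.-1) j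
  | true, false => exists k, (k < n.-1)%N /\ exists s,
      asig s (fun m => if m == 0%N then t else if m == 1%N then j
                       else X.2 (bump k m.-2)) (X.2 k)
  | true, true => False
  end.

(* subsets of I \cup \bar I: [bool * I -> Prop], (true, i) = \bar i *)
Definition phi (J : bool * I -> Prop) (X : bool * (nat -> option I)) : bool * I -> Prop :=
  fun y => exists j : bool * I, J j /\ musym j.1 (Some j.2) X (Some y.2).

Definition phi_iter (J : bool * I -> Prop) (Xs : seq (bool * (nat -> option I))) :=
  foldl phi J Xs.

Definition connected (i j : I) : Prop :=
  i = j \/
  (i <> j /\ exists (Xs : seq (bool * (nat -> option I))) (b : bool),
     (0 < size Xs)%N /\
     (forall s, (0 < s < size Xs)%N ->
        exists y, phi_iter (fun y => y = (b, i)) (take s Xs) y) /\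
     phi_iter (fun y => y = (b, i)) Xs (false, j)).

Definition cls (i : I) : I -> Prop := connected i.

Definition Vcls (i : I) (z : L) : Prop :=
  span (fun w => exists ix : nat -> I, (forall r, (r < n)%N -> cls i (ix r)) /\
                                       w = mu [ffun r : 'I_n => e (ix r)]) z /\ V z.

Definition Wcls (i : I) (z : L) : Prop := span (fun w => exists j, cls i j /\ w = e j) z.

Definition Jcls (i : I) (z : L) : Prop := exists v w, Vcls i v /\ Wcls i w /\ z = v + w.

End ColorGLt.

(* Main.v *)
Require Import Defs.
From HB Require Import structures.
From mathcomp Require Import all_boot all_order all_algebra all_fingroup.
From mathcomp Require Import zify.
From Stdlib Require Import Lia FunctionalExtensionality PropExtensionality IndefiniteDescription Classical.
Set Implicit Arguments. Unset Strict Implicit. Unset Printing Implicit Defensive.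
Import GRing.Theory.
Local Open Scope ring_scope.

Section Aux.
Variables (F : fieldType) (L : lmodType F).

Lemma span_gen (P : L -> Prop) x : P x -> Defs.span P x.
Proof.
move=> Px; exists 1%N, (fun _ => 1), (fun _ => x); split => //.
by rewrite big_ord1 scale1r.
Qed.

Lemma span_closed (P Q : L -> Prop) : subspace Q -> (forall x, P x -> Q x) ->
  forall z, Defs.span P z -> Q z.
Proof.
move=> [Q0 QS] PQ z [m [c [y [Py ->]]]].
elim: m c y Py => [|m IH] c y Py; first by rewrite big_ord0.
rewrite big_ord_recr /= addrC; apply: QS; first exact: PQ.
exact: (IH (fun k => c (widen_ord (leqnSn m) k)) (fun k => y (widen_ord (leqnSn m) k))).
Qed.

Lemma span_subspace (P : L -> Prop) : subspace (Defs.span P).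
Proof.
split; first by exists 0%N, (fun _ => 0), (fun _ => 0); split; [case | rewrite big_ord0].
move=> a x y [m1 [c1 [y1 [P1 ->]]]] [m2 [c2 [y2 [P2 ->]]]].
exists (m1 + m2)%N, (fun k => match split k with inl k1 => a * c1 k1 | inr k2 => c2 k2 end),
  (fun k => match split k with inl k1 => y1 k1 | inr k2 => y2 k2 end); split.
  by move=> k; case: (split k).
rewrite big_split_ord /= scaler_sumr; congr (_ + _); apply: eq_bigr => k _.
  by rewrite -[lshift _ _]/(unsplit (inl k)) unsplitK scalerA.
by rewrite -[rshift _ _]/(unsplit (inr k)) unsplitK.
Qed.

Lemma span_mono (P Q : L -> Prop) : (forall x, P x -> Q x) ->
  forall z, Defs.span P z -> Defs.span Q z.
Proof.
move=> PQ; apply: span_closed; first exact: span_subspace.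
by move=> x /PQ; apply: span_gen.
Qed.

Lemma span_zero (P : L -> Prop) : (forall x, P x -> x = 0) -> forall z, Defs.span P z -> z = 0.
Proof.
move=> H; apply: (@span_closed P (fun x => x = 0)) => //.
by split => // a x y -> ->; rewrite scaler0 addr0.
Qed.

Lemma span_add (P : L -> Prop) x y : Defs.span P x -> Defs.span P y -> Defs.span P (x + y).
Proof. by move=> Hx Hy; have [_ S] := span_subspace P; rewrite -[x]scale1r; apply: S. Qed.

Lemma in_line_subspace (I : Type) (e : I -> L) j : subspace (in_line e j).
Proof.
split; first by exists 0; rewrite scale0r.
by move=> a x y [c1 ->] [c2 ->]; exists (a * c1 + c2); rewrite scalerDl scalerA.
Qed.

End Aux.

Section Main.
Variables (F : fieldType) (G : zmodType) (n : nat) (L : lmodType F).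
Variables (eps : G -> G -> F) (Lg : G -> L -> Prop) (mu : {ffun 'I_n -> L} -> L).
Variable (alpha : 'I_n -> 'I_n -> 'I_n -> {perm 'I_n} -> {perm 'I_n.-1} -> F).
Variables (V W : L -> Prop) (I : Type) (e : I -> L).
Hypothesis n2 : (2 <= n)%N.
Variable i_def : I.
Hypothesis Hgr : graded_nary_algebra Lg mu.
Hypothesis Hglt : color_gLt Lg mu eps alpha.
Hypothesis Hq : quasi_multiplicative_basis Lg mu V W e.

Lemma ml : multilinear mu.
Proof. by case: Hgr => _ []. Qed.

Lemma mu_upd0 x r : mu (upd x r 0) = 0.
Proof.
have := ml x r 1 0 0; rewrite !scale1r addr0 => /eqP.
by rewrite eq_sym -subr_eq0 addrK; move/eqP.
Qed.

Lemma mu_upd_sum x r m (c : 'I_m -> F) (y : 'I_m -> L) :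
  mu (upd x r (\sum_(k < m) c k *: y k)) = \sum_(k < m) c k *: mu (upd x r (y k)).
Proof.
elim: m c y => [|m IH] c y; first by rewrite !big_ord0 mu_upd0.
rewrite !big_ord_recr /= [X in upd _ _ X]addrC.
have Hm := ml. rewrite /multilinear in Hm. by rewrite Hm IH addrC.
Qed.

Lemma upd_id (x : {ffun 'I_n -> L}) (r : 'I_n) : upd x r (x r) = x.
Proof. by apply/ffunP => p; rewrite ffunE; case: eqP => // ->. Qed.

Lemma mu_span_zero (A : 'I_n -> L -> Prop) :
  (forall f : {ffun 'I_n -> L}, (forall r, A r (f r)) -> mu f = 0) ->
  forall f : {ffun 'I_n -> L}, (forall r, Defs.span (A r) (f r)) -> mu f = 0.
Proof.
move=> H.
suff K : forall k (f : {ffun 'I_n -> L}), (forall r : 'I_n, (r < k)%N -> Defs.span (A r) (f r)) ->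
    (forall r : 'I_n, (k <= r)%N -> A r (f r)) -> mu f = 0.
  by move=> f Hf; apply: (K n) => // r; rewrite leqNgt ltn_ord.
elim=> [|k IH] f H1 H2; first by apply: H => r; apply: H2.
case: (ltnP k n) => [kn|nk]; last first.
  apply: IH => r rk; first by apply: H1; apply: (leq_trans rk).
  by have := leq_trans (ltn_ord r) (leq_trans nk rk); rewrite ltnn.
pose ko := Ordinal kn.
have [m [c [y [Py Ef]]]] := H1 ko (ltnSn k).
rewrite -(upd_id f ko) Ef mu_upd_sum big1 // => j _.
rewrite (IH (upd f ko (y j))) ?scaler0 // => r Hr; rewrite ffunE.
  case: eqP => [Er|_]; last by apply: H1; apply: (leq_trans Hr).
  by move: Hr; rewrite Er /= ltnn.
case: eqP => [->|ne]; first exact: Py.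
apply: H2; rewrite ltn_neqAle Hr andbT; apply/eqP => Ek; apply: ne.
by apply: val_inj; rewrite /= Ek.
Qed.


Definition Sp (p : 'I_n -> option I) :=
  Defs.span (fun w => exists f : {ffun 'I_n -> L}, (forall r, usym V e (p r) (f r)) /\ w = mu f).

Definition good (p : 'I_n -> option I) (t : option I) : Prop :=
  (exists z, Sp p z /\ z <> 0) /\
  match t with Some r => forall z, Sp p z -> in_line e r z | None => forall z, Sp p z -> V z end.

Lemma prodset_Sp (s : {perm 'I_n}) (js : nat -> option I) z :
  prodset mu s (fun r => usym V e (js r)) z <-> Sp (fun r => js (s r)) z.
Proof.
split; apply: span_mono => w.
  case=> x [Hx ->]; exists [ffun r => x (s r)]; split => // r; rewrite ffunE; exact: Hx.
case=> f [Hf ->]; exists [ffun r => f ((s^-1)%g r)]; split.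
  by move=> r; rewrite ffunE; have := Hf ((s^-1)%g r); rewrite permKV.
by congr mu; apply/ffunP => r; rewrite !ffunE permK.
Qed.

Lemma asig_good (s : {perm 'I_n}) (js : nat -> option I) t :
  asig mu V e s js t <-> good (fun r => js (s r)) t.
Proof.
rewrite /asig /good /=; split => [[[z [Hz nz]] H] | [[z [Hz nz]] H]]; split.
- by exists z; split => //; apply/prodset_Sp.
- by case: t H => [r|] H z' Hz'; apply: H; apply/prodset_Sp.
- by exists z; split => //; apply/prodset_Sp.
- by case: t H => [r|] H z' Hz'; apply: H; apply/prodset_Sp.
Qed.

Lemma good_ext p p' t : (forall r, p r = p' r) -> good p t -> good p' t.
Proof. by move=> E; have -> : p' = p by apply: functional_extensionality => r; rewrite E. Qed.

Definition o0 : 'I_n := Ordinal (leq_trans (ltnSn 0) (ltnW n2)).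
Definition o1 : 'I_n := Ordinal n2.

Definition isS (o : option I) : bool := if o is Some _ then true else false.
Definition oget (o : option I) : I := if o is Some i then i else i_def.

Lemma sort_perm (p : 'I_n -> option I) :
  exists (k : nat) (sg : {perm 'I_n}), forall r : 'I_n,
    isS (p (sg r)) = (r < k)%N.
Proof.
set S := [pred q | isS (p q)].
pose l := enum S ++ enum (predC S).
have szl : size l = n.
  by rewrite size_cat -!cardE cardC card_ord.
have ul : uniq l.
  rewrite cat_uniq !enum_uniq /= andbT; apply/hasPn => x.
  by rewrite !mem_enum inE; first [by [] | by rewrite inE | by move=> H; rewrite inE /=].
have inj : injective (fun r : 'I_n => nth o0 l r).
  move=> r1 r2 /eqP; rewrite nth_uniq ?szl ?ul // => /eqP; apply: val_inj.
exists (size (enum S)), (perm inj) => r; rewrite permE nth_cat.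
case: ifP => rk.
  have : nth o0 (enum S) r \in enum S by rewrite mem_nth //.
  by rewrite mem_enum.
have : nth o0 (enum (predC S)) (r - size (enum S)) \in enum (predC S).
  rewrite mem_nth //; have E : (size (enum S) + size (enum (predC S)) = n)%N.
    by rewrite -size_cat.
  move/negbT: rk; rewrite -leqNgt => rk; rewrite ltn_subLR // E; exact: ltn_ord.
by rewrite mem_enum inE => /negbTE.
Qed.


Lemma dich p : (exists j, forall z, Sp p z -> in_line e j z) \/ (forall z, Sp p z -> V z).
Proof.
have [[sV _] [_ [_ [_ [_ [_ [H1 [H2 H3]]]]]]]] := Hq.
have [k [sg Hsg]] := sort_perm p.
have key : forall Q : L -> Prop, subspace Q ->
    (forall f : {ffun 'I_n -> L}, (forall r, usym V e (p r) (f r)) -> Q (mu f)) ->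
    forall z, Sp p z -> Q z.
  by move=> Q sQ HQ; apply: span_closed => // w [f [Hf ->]]; exact: HQ.
case: (ltnP 0 k) => k0; last first.
  move: k0; rewrite leqn0 => /eqP k0; subst k.
  have pN : forall r, p r = None.
    move=> r; case E: (p r) => [a|] //.
    by have := Hsg ((sg^-1)%g r); rewrite permKV E ltn0.
  have HG : forall f : {ffun 'I_n -> L}, (forall r, usym V e (p r) (f r)) ->
      prodset mu 1%g (fun _ => V) (mu f).
    move=> f Hf; apply: span_gen; exists f; split.
      by move=> r; have := Hf r; rewrite pN.
    by congr mu; apply/ffunP => r; rewrite ffunE perm1.
  case: H3 => [[j Hj]|HV]; [left; exists j | right]; apply: key.
  - exact: in_line_subspace.
  - by move=> f Hf; apply: Hj; apply: HG.
  - exact: sV.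
  - by move=> f Hf; apply: HV; apply: HG.
case: (ltnP k n) => kn.
  pose ix (m : nat) := oget (p (sg (insubd o0 m))).
  have [j Hj] := H2 k ix ((sg^-1)%g) (introT andP (conj k0 kn)).
  left; exists j; apply: key; first exact: in_line_subspace.
  move=> f Hf; apply: Hj; apply: span_gen.
  exists [ffun r => f (sg r)]; split.
    move=> r; rewrite ffunE; have := Hsg r; have := Hf (sg r).
    case: ifP => rk; case E: (p (sg r)) => [a|] //= Hfa _.
    by rewrite /ix valKd E.
  by congr mu; apply/ffunP => r; rewrite !ffunE permKV.
have pS : forall r, p r = Some (oget (p r)).
  move=> r; case E: (p r) => [a|] //.
  by have := Hsg ((sg^-1)%g r); rewrite permKV E (leq_trans (ltn_ord _) kn).
pose ix (r : 'I_n) := oget (p r).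
have Ef : forall f : {ffun 'I_n -> L}, (forall r, usym V e (p r) (f r)) ->
    f = [ffun r => e (ix r)].
  by move=> f Hf; apply/ffunP => r; rewrite ffunE; have := Hf r; rewrite pS.
case: (H1 ix) => [[j Hj]|HV]; [left; exists j | right]; apply: key.
- exact: in_line_subspace.
- by move=> f /Ef ->.
- exact: sV.
- by move=> f /Ef ->.
Qed.



Notation conn := (connected mu V e).
Notation PHI := (phi mu V e).
Notation PHIi := (phi_iter mu V e).

Lemma phi_mono (J J' : bool * I -> Prop) X :
  (forall y, J y -> J' y) -> forall y, PHI J X y -> PHI J' X y.
Proof. by move=> JJ y [j [Jj H]]; exists j; split => //; apply: JJ. Qed.

Lemma phi_iter_mono (J J' : bool * I -> Prop) Xs :
  (forall y, J y -> J' y) -> forall y, PHIi J Xs y -> PHIi J' Xs y.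
Proof.
elim: Xs J J' => [|X Xs IH] J J' JJ //=.
by apply: IH; apply: phi_mono.
Qed.

Lemma phi_iter_bit (J : bool * I -> Prop) Xs b b' y :
  (0 < size Xs)%N -> PHIi J Xs (b, y) -> PHIi J Xs (b', y).
Proof.
case/lastP: Xs => [//|Xs X] _; rewrite /phi_iter !foldl_rcons.
by case=> j [Jj H]; exists j.
Qed.

Lemma conn_step c j X t : musym mu V e c (Some j) X (Some t) -> conn j t.
Proof.
move=> H; case: (classic (j = t)) => [->|ne]; first by left.
right; split => //; exists [:: X], c; split => //; split.
  by move=> s /andP [s0 s1]; move: s1; rewrite ltnNge s0.
by exists (c, j).
Qed.

Lemma conn_trans a b c : conn a b -> conn b c -> conn a c.
Proof.
move=> Hab Hbc; case: (classic (a = c)) => [->|nac]; first by left.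
case: Hbc => [<-//|[nbc [Xs2 [b2 [sz2 [mid2 fin2]]]]]].
case: Hab => [Eab|[nab [Xs1 [b1 [sz1 [mid1 fin1]]]]]]; first by subst; right; split => //; exists Xs2, b2.
have fin1' : PHIi (fun y => y = (b1, a)) Xs1 (b2, b) by apply: phi_iter_bit fin1.
have mono : forall Ys y, PHIi (fun y => y = (b2, b)) Ys y ->
    PHIi (fun y => y = (b1, a)) (Xs1 ++ Ys) y.
  by move=> Ys y H; rewrite /phi_iter foldl_cat; apply: (phi_iter_mono _ H) => y' ->.
right; split => //; exists (Xs1 ++ Xs2), b1; split; first by rewrite size_cat (leq_trans sz1) ?leq_addr.
split; last exact: mono.
move=> s /andP [s0 s1]; rewrite take_cat; case: ifP => ss1; first by apply: mid1; rewrite s0 ss1.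
case E: (s - size Xs1)%N => [|s'].
  by rewrite take0 cats0; exists (false, b).
have [y Hy] : exists y, PHIi (fun y => y = (b2, b)) (take (s - size Xs1) Xs2) y.
  apply: mid2; rewrite E /=; move: s1; rewrite size_cat -E.
  move/negbT: ss1; rewrite -leqNgt => ss1.
  by rewrite ltn_subLR.
by exists y; apply: mono; rewrite -E.
Qed.

Lemma swap_good (A B : option I) (C : nat -> option I) (s : {perm 'I_n}) t :
  asig mu V e s (fun m => if m == 0%N then A else if m == 1%N then B else C m) t ->
  asig mu V e (s * tperm o0 o1)%g (fun m => if m == 0%N then B else if m == 1%N then A else C m) t.
Proof.
move/asig_good => H; apply/asig_good; apply: good_ext H => r; rewrite permM.
set x := s r.
case: (eqVneq x o0) => [->|n0]; first by rewrite tpermL.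
case: (eqVneq x o1) => [->|n1]; first by rewrite tpermR.
rewrite tpermD; [|by rewrite eq_sym|by rewrite eq_sym].
have -> : (val x == 0%N) = false by apply/negbTE; apply: contra n0 => /eqP h; apply/eqP; apply: val_inj.
by have -> : (val x == 1%N) = false by apply/negbTE; apply: contra n1 => /eqP h; apply/eqP; apply: val_inj.
Qed.

Lemma rev_step c j X t : musym mu V e c (Some j) X (Some t) ->
  exists c' X', musym mu V e c' (Some t) X' (Some j).
Proof.
case: X => bX Y; case: c; case: bX => //= H.
- case: H => k [kn [s Hs]]; exists true, (false, Y); exists k; split => //.
  by exists (s * tperm o0 o1)%g; apply: swap_good.
- by exists false, (false, Y).
- by exists false, (true, Y).
Qed.

Lemma conn_sym a b : conn a b -> conn b a.
Proof.
case=> [->|[nab [Xs [b0 [sz [_ fin]]]]]]; first by left.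
suff K : forall Ys y, PHIi (fun y => y = (b0, a)) Ys y -> conn y.2 a by exact: (K _ _ fin).
elim/last_ind => [|Ys X IH] y /=; first by move=> ->; left.
rewrite /phi_iter foldl_rcons => -[j [Jj Hm]].
have [c' [X' H']] := rev_step Hm.
exact: conn_trans (conn_step H') (IH _ Jj).
Qed.



Lemma o01 : o0 != o1.
Proof. by apply/eqP => /(congr1 val). Qed.

Lemma two_perm (a b : 'I_n) : a != b -> exists s : {perm 'I_n}, s a = o0 /\ s b = o1.
Proof.
move=> ab; set b' := tperm a o0 b.
have nb' : b' != o0.
  apply: contra ab => /eqP E; apply/eqP; apply: (@perm_inj _ (tperm a o0)).
  by rewrite -/b' E tpermL.
exists (tperm a o0 * tperm b' o1)%g; rewrite !permM tpermL; split.
  by rewrite tpermD // eq_sym o01.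
by rewrite -/b' tpermL.
Qed.

Definition shiftY (p : 'I_n -> option I) (s : {perm 'I_n}) (m : nat) : option I :=
  p ((s^-1)%g (insubd o0 m.+1)).

Lemma val_neq0 (s : {perm 'I_n}) a r : s a = o0 -> r != a -> (val (s r) == 0%N) = false.
Proof.
move=> sa ra; apply/negbTE; apply: contra ra => /eqP h.
have : s r = s a by rewrite sa; apply: val_inj.
by move/perm_inj => ->.
Qed.

Lemma forward p (s : {perm 'I_n}) a j t : s a = o0 -> p a = Some j -> good p t ->
  musym mu V e false (Some j) (false, shiftY p s) t.
Proof.
move=> sa pa gp; exists s; apply/asig_good; apply: good_ext gp => r.
case: (eqVneq r a) => [->|ra]; first by rewrite sa /= pa.
rewrite (val_neq0 sa ra) /shiftY /= prednK; last by rewrite lt0n (val_neq0 sa ra).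
by rewrite valKd permK.
Qed.

Lemma caseA i' h' : ~ conn i' h' ->
  forall (f : {ffun 'I_n -> L}) (a b : 'I_n), a != b -> f a = e i' -> f b = e h' -> mu f = 0.
Proof.
move=> nc f a b ab fa fb.
have [_ [_ [_ [_ [[dsx _] [[_ [_ spW]] _]]]]]] := Hq.
pose A (r : 'I_n) := if r == a then (fun u => u = e i') else if r == b then (fun u => u = e h')
                     else (fun u => V u \/ exists j, u = e j).
apply: (@mu_span_zero A); last first.
  move=> r; rewrite /A; case: eqP => [->|_]; first by apply: span_gen.
  case: eqP => [->|_]; first by apply: span_gen.
  have [v [w [Vv [Ww ->]]]] := dsx (f r).
  apply: span_add; first by apply: span_gen; left.
  have [m [g [c ->]]] := (spW w).1 Ww.
  by exists m, c, (fun k => e (g k)); split => // k; right; exists (g k).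
move=> g Hg.
have H : forall r, exists o, r != a -> r != b -> usym V e o (g r).
  move=> r; case: (eqVneq r a) => [_|ra]; first by exists None.
  case: (eqVneq r b) => [_|rb]; first by exists None.
  have := Hg r; rewrite /A (negbTE ra) (negbTE rb) => -[Vg|[j Ej]].
    by exists None.
  by exists (Some j).
pose q r := proj1_sig (constructive_indefinite_description _ (H r)).
have Hqq : forall r, r != a -> r != b -> usym V e (q r) (g r).
  by move=> r; rewrite /q; case: (constructive_indefinite_description _ _).
pose p r := if r == a then Some i' else if r == b then Some h' else q r.
have Hp : forall r, usym V e (p r) (g r).
  move=> r; rewrite /p; have := Hg r; rewrite /A.
  case: (eqVneq r a) => [//|ra]; case: (eqVneq r b) => [//|rb] _.
  exact: Hqq.
have pa : p a = Some i' by rewrite /p eqxx.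
have pb : p b = Some h' by rewrite /p (eq_sym b a) (negbTE ab) eqxx.
case: (eqVneq (mu g) 0) => // nz; exfalso.
have Sg : Sp p (mu g) by apply: span_gen; exists g.
have [s [sa sb]] := two_perm ab.
have ba : b != a by rewrite eq_sym.
have [s' [sb' sa']] := two_perm ba.
case: (dich p) => [[t Ht]|HV].
  have gp : good p (Some t) by split; [exists (mu g); split; [exact: Sg | exact/eqP] | exact: Ht].
  have c1 := conn_step (forward sa pa gp).
  have c2 := conn_step (forward sb' pb gp).
  exact: nc (conn_trans c1 (conn_sym c2)).
have gp : good p None by split; [exists (mu g); split; [exact: Sg | exact/eqP] | exact: HV].
pose Y m := if m is m'.+1 then p ((s^-1)%g (insubd o0 m'.+2)) else None.
have : musym mu V e true (Some h') (false, Y) (Some i').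
  exists 0%N; split; first by move: n2; case: (n) => [|[|k]].
  exists s; apply/asig_good; apply: good_ext gp => r /=.
  case: (eqVneq r a) => [->|ra]; first by rewrite sa /= pa.
  case: (eqVneq r b) => [->|rb]; first by rewrite sb /= pb.
  have h0 := val_neq0 sa ra.
  have h1 : (val (s r) == 1%N) = false.
    apply/negbTE; apply: contra rb => /eqP h; apply/eqP; apply: (@perm_inj _ s).
    by rewrite sb; apply: val_inj.
  rewrite h0 h1 /= add0n.
  have E : ((val (s r)).-2).+2 = val (s r).
    by move: h0 h1; case: (val (s r)) => [|[|k]].
  by rewrite E valKd permK.
move/conn_step/conn_sym; exact: nc.
Qed.



Lemma pnat_val N (s : {perm 'I_N}) (o : 'I_N) : Defs.pnat s o = s o.
Proof. by rewrite /Defs.pnat valK. Qed.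

Lemma insubd_val m : (m < n)%N -> val (insubd o0 m) = m.
Proof. by move=> mn; rewrite insubdK. Qed.

Lemma gr (ix : nat -> I) (u : L) (f : {ffun 'I_n -> L}) (a kk : 'I_n) :
  a != kk -> f kk = mu [ffun q : 'I_n => e (ix q)] -> f a = u ->
  (forall r, homogeneous Lg (f r)) ->
  (forall (m : nat) (g : {ffun 'I_n -> L}) (a2 b2 : 'I_n), (m < n)%N -> a2 != b2 ->
      g a2 = u -> g b2 = e (ix m) -> (forall r, homogeneous Lg (g r)) -> mu g = 0) ->
  mu f = 0.
Proof.
move=> akk fkk fa homf Hred.
have [_ [_ [_ [_ [_ [[hom _] _]]]]]] := Hq.
pose dF r := proj1_sig (constructive_indefinite_description _ (homf r)).
have HdF : forall r, Lg (dF r) (f r).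
  by move=> r; rewrite /dF; case: (constructive_indefinite_description _ _).
pose dE i := proj1_sig (constructive_indefinite_description _ (hom i)).
have HdE : forall i, Lg (dE i) (e i).
  by move=> i; rewrite /dE; case: (constructive_indefinite_description _ _).
pose idx (m : nat) := if (m < kk)%N then m else m.+1.
pose y m := f (insubd o0 (idx m)); pose dy m := dF (insubd o0 (idx m)).
pose x m := e (ix m); pose dx m := dE (ix m).
have := Hglt kk (x := x) (y := y) (dx := dx) (dy := dy) (fun m _ => HdE (ix m)) (fun m _ => HdF _); cbv zeta => E.
have Ef : [ffun p : 'I_n => if (p < kk)%N then y p else if p == kk then mu [ffun q : 'I_n => x q]
                           else y p.-1] = f.
  apply/ffunP => p; rewrite ffunE /y /idx; case: ltnP => [pk|kp].
    by rewrite valKd.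
  case: eqP => [->|ne]; first by rewrite fkk.
  have kp' : (kk < p)%N by rewrite ltn_neqAle kp andbT; apply/eqP => h; apply: ne; apply: val_inj.
  have p0 : (0 < p)%N by apply: leq_ltn_trans kp'.
  have -> : (p.-1 < kk)%N = false by apply/negbTE; rewrite -leqNgt -ltnS prednK.
  by rewrite prednK // valKd.
have Hin : forall (i0 j0 : 'I_n) (s1 : {perm 'I_n}) (s2 : {perm 'I_n.-1}),
    mu [ffun q : 'I_n => if (q < j0)%N then y (Defs.pnat s2 q)
                         else if q == j0 then x (Defs.pnat s1 i0)
                         else y (Defs.pnat s2 q.-1)] = 0.
  move=> i0 j0 s1 s2.
  pose a' := if (a < kk)%N then nat_of_ord a else (nat_of_ord a).-1.
  have ya : y a' = u.
    rewrite /a'; case: ifP => ak; rewrite /y /idx; first by rewrite ak valKd fa.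
    have kp' : (kk < a)%N.
      rewrite ltn_neqAle eq_sym akk leqNgt ak //.
    have a0 : (0 < a)%N by apply: leq_ltn_trans kp'.
    have -> : ((nat_of_ord a).-1 < kk)%N = false by apply/negbTE; rewrite -leqNgt -ltnS prednK.
    by rewrite prednK // valKd.
  have a'n : (a' < n.-1)%N.
    have akv : nat_of_ord a != nat_of_ord kk by [].
    rewrite /a'; move: akv; have := ltn_ord kk; have := ltn_ord a; case: ifP => ak; move: ak; lia.
  pose ao : 'I_n.-1 := Ordinal a'n.
  pose q' := val ((s2^-1)%g ao).
  have pq : Defs.pnat s2 q' = a' by rewrite /q' pnat_val permKV.
  have q'n : (q' < n.-1)%N := ltn_ord _.
  pose a2v := if (q' < j0)%N then q' else q'.+1.
  have a2n : (a2v < n)%N by rewrite /a2v; have := n2; case: ifP; lia.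
  pose a2 := insubd o0 a2v.
  have va2 : val a2 = a2v := insubd_val a2n.
  have ne2 : a2 != j0.
    apply/eqP => /(congr1 val); rewrite va2 /a2v; case: ifP => h E2.
      by rewrite E2 ltnn in h.
    by rewrite -E2 ltnSn in h.
  apply: (Hred (Defs.pnat s1 i0) _ a2 j0).
  - by rewrite pnat_val ltn_ord.
  - exact: ne2.
  - rewrite ffunE va2 (negbTE ne2) /a2v; case: (ltnP q' j0) => h; first by rewrite h pq ya.
    have -> : (q'.+1 < j0)%N = false by apply/negbTE; rewrite -leqNgt ltnW.
    by rewrite /= pq ya.
  - by rewrite ffunE ltnn eqxx.
  - move=> r; rewrite ffunE; case: ifP => _; first exact: homf.
    by case: ifP => _; [exact: hom | exact: homf].
rewrite -Ef E big1 // => i0 _; rewrite big1 // => j0 _; rewrite big1 // => s1 _.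
rewrite big1 // => s2 _; rewrite Hin.
have -> : [ffun p : 'I_n => if p == i0 then 0 else x (Defs.pnat s1 p)] =
          upd [ffun p : 'I_n => x (Defs.pnat s1 p)] i0 0.
  by apply/ffunP => p; rewrite !ffunE.
by rewrite mu_upd0 scaler0.
Qed.



Lemma caseB i' (hx : nat -> I) : (forall m, (m < n)%N -> ~ conn i' (hx m)) ->
  forall (f : {ffun 'I_n -> L}) (a b : 'I_n), a != b -> f a = e i' ->
  f b = mu [ffun q : 'I_n => e (hx q)] -> (forall r, homogeneous Lg (f r)) -> mu f = 0.
Proof.
move=> nc f a b ab fa fb hf.
apply: (@gr hx (e i') f a b ab fb fa hf) => m g a2 b2 mn ne ga gb _.
have := @caseA i' (hx m) (nc m mn) g a2 b2 ne ga gb. done.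
Qed.

Lemma caseC (ix hx : nat -> I) :
  (forall m m', (m < n)%N -> (m' < n)%N -> ~ conn (ix m) (hx m')) ->
  forall (f : {ffun 'I_n -> L}) (a b : 'I_n), a != b ->
  f a = mu [ffun q : 'I_n => e (ix q)] ->
  f b = mu [ffun q : 'I_n => e (hx q)] -> (forall r, homogeneous Lg (f r)) -> mu f = 0.
Proof.
move=> nc f a b ab fa fb hf.
have ba : b != a by rewrite eq_sym.
apply: (@gr ix (mu [ffun q : 'I_n => e (hx q)]) f b a ba fa fb hf) => m g a2 b2 mn ne ga gb hg.
have ne' : b2 != a2 by rewrite eq_sym.
exact: (caseB (nc m ^~ mn) ne' gb ga hg).
Qed.

Lemma hom_prod (ix : nat -> I) : homogeneous Lg (mu [ffun q : 'I_n => e (ix q)]).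
Proof.
have [_ [_ [_ [_ [_ [[hom _] _]]]]]] := Hq.
pose dE i := proj1_sig (constructive_indefinite_description _ (hom i)).
have HdE : forall i, Lg (dE i) (e i).
  by move=> i; rewrite /dE; case: (constructive_indefinite_description _ _).
have [_ [_ Hg]] := Hgr.
exists (\sum_(r < n) dE (ix r)); apply: Hg => r; rewrite ffunE; exact: HdE.
Qed.

Definition Gen (C : I -> Prop) (w : L) : Prop :=
  (exists j, C j /\ w = e j) \/
  (exists ix : nat -> I, (forall r, (r < n)%N -> C (ix r)) /\ w = mu [ffun q : 'I_n => e (ix q)]).

Lemma Jcls_span i w : Jcls mu V e i w -> Defs.span (Gen (cls mu V e i)) w.
Proof.
case=> v [w' [[Hv _] [Hw ->]]]; apply: span_add.
  by apply: span_mono Hv => u [ix [Hix ->]]; right; exists ix.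
by apply: span_mono Hw => u [j [Hj ->]]; left; exists j.
Qed.

Lemma hom_span w : Defs.span (homogeneous Lg) w.
Proof.
have [[_ [Hdec _]] _] := Hgr.
have [sq [fg [_ [Hfg ->]]]] := Hdec w.
exists (size sq), (fun _ => 1), (fun k => fg (nth 0 sq k)); split.
  by move=> k; exists (nth 0 sq k); apply: Hfg; apply: mem_nth.
by rewrite (big_nth 0) big_mkord; apply: eq_bigr => k _; rewrite scale1r.
Qed.

Lemma main i h : cls mu V e i <> cls mu V e h ->
  forall (s : {perm 'I_n}) (z : L),
    prodset mu s (fun r => if val r == 0%N then Jcls mu V e i
                           else if val r == 1%N then Jcls mu V e h
                           else (fun _ => True)) z ->
    z = 0.
Proof.
move=> ncl.
have NC : forall x y, cls mu V e i x -> cls mu V e h y -> ~ conn x y.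
  move=> x y cx cy cxy; apply: ncl.
  apply: functional_extensionality => w; apply: propositional_extensionality.
  rewrite /cls; split => H.
    exact: conn_trans cy (conn_trans (conn_sym cxy) (conn_trans (conn_sym cx) H)).
  exact: conn_trans cx (conn_trans cxy (conn_trans (conn_sym cy) H)).
move=> s z; apply: span_zero => w [x [Hx ->]].
pose f := [ffun r => x (s r)].
pose a := (s^-1)%g o0; pose b := (s^-1)%g o1.
have ab : a != b by apply: contra o01 => /eqP /perm_inj ->.
have fa : f a = x o0 by rewrite ffunE permKV.
have fb : f b = x o1 by rewrite ffunE permKV.
pose A (r : 'I_n) := if r == a then Gen (cls mu V e i) else if r == b then Gen (cls mu V e h)
                     else homogeneous Lg.
apply: (@mu_span_zero A); last first.
  move=> r; rewrite /A; case: eqP => [->|_].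
    by rewrite fa; apply: Jcls_span; exact: (Hx o0).
  case: eqP => [->|_]; last exact: hom_span.
  by rewrite fb; apply: Jcls_span; exact: (Hx o1).
move=> g Hg.
have ga : Gen (cls mu V e i) (g a) by have := Hg a; rewrite /A eqxx.
have gb : Gen (cls mu V e h) (g b) by have := Hg b; rewrite /A eq_sym (negbTE ab) eqxx.
have hG : forall C w0, Gen C w0 -> homogeneous Lg w0.
  move=> C w0 [[j [_ ->]]|[ix [_ ->]]]; last exact: hom_prod.
  by have [_ [_ [_ [_ [_ [[hom _] _]]]]]] := Hq; apply: hom.
have hg : forall r, homogeneous Lg (g r).
  move=> r; have := Hg r; rewrite /A; case: eqP => _; first exact: hG.
  by case: eqP => _ //; exact: hG.
case: ga => [[j [cj ea]]|[ix [cix ea]]]; case: gb => [[k [ck eb]]|[hx [chx eb]]].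
- exact: (caseA (NC j k cj ck) ab ea eb).
- exact: (caseB (fun m mn => NC j (hx m) cj (chx m mn)) ab ea eb hg).
- have ba : b != a by rewrite eq_sym.
  apply: (caseB _ ba eb ea hg) => m mn /conn_sym; exact: NC (cix m mn) ck.
- exact: (caseC (fun m m' mn mn' => NC (ix m) (hx m') (cix m mn) (chx m' mn')) ab ea eb hg).
Qed.

End Main.

Theorem lemma3p11 (F : fieldType) (G : zmodType) (n : nat) (L : lmodType F)
  (eps : G -> G -> F) (Lg : G -> L -> Prop) (mu : {ffun 'I_n -> L} -> L)
  (alpha : 'I_n -> 'I_n -> 'I_n -> {perm 'I_n} -> {perm 'I_n.-1} -> F)
  (V W : L -> Prop) (I : Type) (e : I -> L) :
  (2 <= n)%N ->
  bicharacter eps ->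
  graded_nary_algebra Lg mu ->
  color_gLt Lg mu eps alpha ->
  quasi_multiplicative_basis Lg mu V W e ->
  forall i h : I, cls mu V e i <> cls mu V e h ->
  forall (s : {perm 'I_n}) (z : L),
    prodset mu s (fun r => if val r == 0%N then Jcls mu V e i
                           else if val r == 1%N then Jcls mu V e h
                           else (fun _ => True)) z ->
    z = 0.
Proof.
move=> n2 _ Hgr Hglt Hq i h.
exact: (@main F G n L eps Lg mu alpha V W I e n2 i Hgr Hglt Hq i h).
Qed.
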